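(* Let $A(z)=\sum_{k=0}^{\infty}a_kz^k$ with $a_0\neq 0$ and $H(z)=\sum_{k=1}^{\infty}h_kz^k$ with $h_1\neq 0$ be analytic in a disk $|z|<R$ with $R>1$, with real coefficients. Let the Sheffer polynomials $p_k$ be defined by $A(t)e^{xH(t)}=\sum_{k=0}^{\infty}p_k(x)t^k$ for $|t|<R$, and assume $p_k(x)\ge 0$ for all $x\ge 0$ and all $k$, $A(1)\neq 0$ and $H'(1)=1$. Let $(b_n)$ be a positive increasing sequence with $b_n\to\infty$ and $b_n/n\to 0$, and define $$T_n^*(f;x)=\frac{e^{-\frac{n}{b_n}xH(1)}}{A(1)}\sum_{k=0}^{\infty}p_k\Big(\frac{n}{b_n}x\Big)f\Big(\frac{k}{n}b_n\Big).$$ Then for every $f\in C_E[0,\infty)$ and every $a>0$, $T_n^*(f;\cdot)\to f$ uniformly on $[0,a]$ as $n\to\infty$.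
   Context: $C_E[0,\infty)$ denotes the set of continuous functions $f$ on $[0,\infty)$ such that $|f(x)|\le \beta e^{\alpha x}$ for all $x\ge 0$, for some finite positive constants $\alpha,\beta$. *)

(* Defs.v *)
From Stdlib Require Import Reals Lra.
From Coquelicot Require Import Coquelicot.
Open Scope R_scope.

(* Power series with coefficients c converges absolutely on |z| < R
   (i.e. radius of convergence >= R: analytic in the disk |z| < R). *)
Definition abs_conv_on (c : nat -> R) (Rad : R) : Prop :=
  forall r, 0 <= r < Rad -> ex_series (fun k => Rabs (c k) * r ^ k).

Definition CE (f : R -> R) : Prop :=
  (forall x, 0 <= x ->
     filterlim f (within (fun y => 0 <= y) (locally x)) (locally (f x))) /\
  exists alpha beta, 0 < alpha /\ 0 < beta /\
     forall x, 0 <= x -> Rabs (f x) <= beta * exp (alpha * x).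

Definition Tstar (a h : nat -> R) (p : nat -> R -> R) (b : nat -> R)
  (n : nat) (f : R -> R) (x : R) : R :=
  exp (- (INR n / b n) * x * PSeries h 1) / PSeries a 1 *
  Series (fun k => p k (INR n / b n * x) * f (INR k / INR n * b n)).

(* Main.v *)
Require Import Defs.
From Stdlib Require Import Reals Lra Lia.
From Coquelicot Require Import Coquelicot.
Open Scope R_scope.
Lemma rad_gt1 (c : nat -> R) Rad : 1 < Rad -> abs_conv_on c Rad ->
  Rbar_lt (Rabs 1) (CV_radius c).
Proof.
  intros H1 Hc. rewrite Rabs_R1.
  pose (rr := (1 + Rad) / 2).
  assert (Hr : Rbar_le rr (CV_radius c)).
  { unfold CV_radius. destruct (Lub_Rbar_correct (CV_disk c)) as [ub _].
    apply ub. unfold CV_disk.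
    apply ex_series_ext with (a := fun k => Rabs (c k) * rr ^ k).
    - intro n. rewrite Rabs_mult, <- RPow_abs. f_equal. rewrite Rabs_pos_eq; auto.
      unfold rr; lra.
    - apply Hc. unfold rr; lra. }
  destruct (CV_radius c) as [v| |]; simpl in *; auto; unfold rr in Hr; lra.
Qed.

Lemma exp_pow_INR (u : R) (k : nat) : exp (INR k * u) = exp u ^ k.
Proof.
  induction k as [|k IH]. { simpl. rewrite Rmult_0_l. apply exp_0. }
  rewrite S_INR. simpl pow. rewrite Rmult_plus_distr_r, Rmult_1_l, exp_plus, IH. ring.
Qed.

Lemma cont_eps (g : R -> R) (x0 : R) : continuity_pt g x0 ->
  forall eps, 0 < eps -> exists d, 0 < d /\ forall y, Rabs (y - x0) < d -> Rabs (g y - g x0) < eps.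
Proof.
  intros Hc eps He. destruct (Hc eps He) as [d [Hd H]].
  exists d; split; auto. intros y Hy.
  destruct (Req_dec y x0) as [->|Hne].
  - rewrite Rminus_diag, Rabs_R0; auto.
  - apply (H y). split.
    + split. { exact I. } intro E; apply Hne; symmetry; exact E.
    + exact Hy.
Qed.

Lemma eventual (a h : nat -> R) Rad (b : nat -> R) c A :
  1 < Rad -> abs_conv_on a Rad -> is_derive (PSeries h) 1 1 -> 0 < PSeries a 1 ->
  (forall n, 0 < b n) -> is_lim_seq (fun n => b n / INR n) 0 -> c <> 0 -> 0 < A ->
  exists N, forall n, (N <= n)%nat -> 0 < INR n /\ exp (c / (INR n / b n)) < Rad /\
   forall x, 0 <= x <= A ->
    exp (- c * x) * (PSeries a (exp (c / (INR n / b n))) *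
       exp (INR n / b n * x * PSeries h (exp (c / (INR n / b n)))))
    <= 6 * (PSeries a 1 * exp (INR n / b n * x * PSeries h 1)).
Proof.
  intros HR Ha Hh HA1 Hb Hlim Hc HA.
  assert (Hca : 0 < Rabs c) by (apply Rabs_pos_lt; auto).
  assert (HcA : continuity_pt (fun u => PSeries a (exp u)) 0).
  { apply (continuity_pt_comp exp (PSeries a)).
    - apply derivable_continuous_pt, derivable_pt_exp.
    - rewrite exp_0. apply PSeries_continuity, rad_gt1 with Rad; auto. }
  destruct (cont_eps _ _ HcA (PSeries a 1) HA1) as [r1 [Hr1 H1]].
  assert (HcE : continuity_pt exp 0) by apply derivable_continuous_pt, derivable_pt_exp.
  destruct (cont_eps _ _ HcE (Rad - 1)) as [r2 [Hr2 H2]]; [lra|].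
  assert (Hd : derivable_pt_lim (fun u => PSeries h (exp u)) 0 1).
  { apply is_derive_Reals.
    assert (Hh' : is_derive (PSeries h) (exp 0) 1) by (rewrite exp_0; exact Hh).
    pose proof (is_derive_comp (PSeries h) exp 0 1 (exp 0) Hh' (is_derive_exp 0)) as HH.
    rewrite exp_0 in HH. unfold scal in HH; simpl in HH; unfold mult in HH; simpl in HH.
    rewrite Rmult_1_l in HH. exact HH. }
  destruct (Hd (1 / (A * Rabs c))) as [r3 H3].
  { apply Rdiv_lt_0_compat; [lra| apply Rmult_lt_0_compat; auto]. }
  pose (rho := Rmin r1 (Rmin r2 r3)).
  assert (Hrho : 0 < rho).
  { unfold rho. apply Rmin_pos; auto. apply Rmin_pos; auto. apply cond_pos. }
  assert (Hrho1 : rho <= r1) by apply Rmin_l.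
  assert (Hrho2 : rho <= r2) by (eapply Rle_trans; [apply Rmin_r| apply Rmin_l]).
  assert (Hrho3 : rho <= r3) by (eapply Rle_trans; [apply Rmin_r| apply Rmin_r]).
  apply is_lim_seq_spec in Hlim.
  destruct (Hlim (mkposreal (rho / Rabs c) (Rdiv_lt_0_compat _ _ Hrho Hca))) as [N0 HN0].
  exists (max N0 1). intros n Hn.
  assert (Hn1 : (1 <= n)%nat) by lia.
  assert (HINR : 0 < INR n) by (apply lt_0_INR; lia).
  pose proof (Hb n) as Hbn.
  specialize (HN0 n ltac:(lia)). simpl in HN0.
  rewrite Rminus_0_r, Rabs_pos_eq in HN0 by (apply Rlt_le, Rdiv_lt_0_compat; auto).
  pose (u := c / (INR n / b n)).
  assert (Hu : u = c * (b n / INR n)) by (unfold u; field; lra).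
  assert (Hu0 : u <> 0) by (rewrite Hu; apply Rmult_integral_contrapositive; split; auto;
    apply Rgt_not_eq, Rdiv_lt_0_compat; auto).
  assert (Hua : Rabs u < rho).
  { rewrite Hu, Rabs_mult, (Rabs_pos_eq (b n / INR n)) by (apply Rlt_le, Rdiv_lt_0_compat; auto).
    apply Rmult_lt_reg_l with (/ Rabs c). apply Rinv_0_lt_compat; auto.
    rewrite <- Rmult_assoc, Rinv_l, Rmult_1_l by lra.
    replace (/ Rabs c * rho) with (rho / Rabs c) by (unfold Rdiv; ring). exact HN0. }
  fold u.
  split; [exact HINR|]. split.
  { specialize (H2 u ltac:(rewrite Rminus_0_r; lra)). rewrite exp_0 in H2.
    revert H2; unfold Rabs; destruct Rcase_abs; intros; lra. }
  intros x Hx.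
  specialize (H1 u ltac:(rewrite Rminus_0_r; lra)). rewrite exp_0 in H1.
  specialize (H3 u Hu0 ltac:(lra)). rewrite Rplus_0_l, exp_0 in H3.
  pose (D := (PSeries h (exp u) - PSeries h 1) / u - 1).
  fold D in H3.
  assert (HHs : PSeries h (exp u) = PSeries h 1 + u * (D + 1)) by (unfold D; field; auto).
  assert (Hexp : exp (- c * x) * exp (INR n / b n * x * PSeries h (exp u)) =
     exp (INR n / b n * x * PSeries h 1) * exp (x * c * D)).
  { rewrite <- !exp_plus. f_equal. rewrite HHs. unfold u. field. lra. }
  assert (HxcD : x * c * D <= 1).
  { apply Rle_trans with (Rabs (x * c * D)); [apply Rle_abs|].
    rewrite !Rabs_mult, (Rabs_pos_eq x) by lra.
    apply Rle_trans with (A * Rabs c * (1 / (A * Rabs c))).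
    - apply Rmult_le_compat; try apply Rabs_pos.
      + apply Rmult_le_pos; [lra| apply Rabs_pos].
      + apply Rmult_le_compat_r; [apply Rabs_pos| lra].
      + lra.
    - right. field. lra. }
  assert (HQ : exp (x * c * D) <= 3).
  { apply Rle_trans with (exp 1); [| apply exp_le_3].
    destruct (Req_dec (x * c * D) 1) as [E|E]; [rewrite E; lra|].
    left; apply exp_increasing; lra. }
  pose proof (exp_pos (x * c * D)) as HQp.
  pose proof (exp_pos (INR n / b n * x * PSeries h 1)) as HPp.
  assert (HAs : PSeries a (exp u) < 2 * PSeries a 1).
  { revert H1; unfold Rabs; destruct Rcase_abs; intros; lra. }
  replace (exp (- c * x) * (PSeries a (exp u) * exp (INR n / b n * x * PSeries h (exp u))))
    with (PSeries a (exp u) * (exp (- c * x) * exp (INR n / b n * x * PSeries h (exp u)))) by ring.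
  rewrite Hexp.
  set (P := exp (INR n / b n * x * PSeries h 1)) in *.
  set (Q := exp (x * c * D)) in *.
  destruct (Rle_dec (PSeries a (exp u)) 0) as [Hn0|Hp0].
  - assert (0 <= P * Q) by nra.
    assert (PSeries a (exp u) * (P * Q) <= 0) by nra. nra.
  - assert (E1 : PSeries a (exp u) * Q <= 2 * PSeries a 1 * Q) by nra.
    assert (E2 : 2 * PSeries a 1 * Q <= 2 * PSeries a 1 * 3) by nra.
    assert (E3 : PSeries a (exp u) * Q * P <= 6 * PSeries a 1 * P) by nra.
    nra.
Qed.
Lemma Rmax_lip (y t : R) : Rabs (Rmax 0 y - Rmax 0 t) <= Rabs (y - t).
Proof. unfold Rmax; destruct (Rle_dec 0 y), (Rle_dec 0 t);
  unfold Rabs; repeat destruct Rcase_abs; lra. Qed.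

Lemma unif_cont f A : CE f -> 0 <= A -> forall eta, 0 < eta ->
  exists d, 0 < d /\ d <= 1 /\ forall x t, 0 <= x <= A -> 0 <= t ->
    Rabs (t - x) < d -> Rabs (f t - f x) < eta.
Proof.
  intros [Hc _] HA eta He.
  pose (g := fun t => f (Rmax 0 t)).
  assert (Hg : forall t, continuity_pt g t).
  { intro t. apply continuity_pt_filterlim.
    unfold g. eapply filterlim_comp; [| apply (Hc (Rmax 0 t)); apply Rmax_l].
    intros Q [eps HQ]. exists eps. intros y Hy. apply HQ.
    - change (Rabs (Rmax 0 y - Rmax 0 t) < eps).
      eapply Rle_lt_trans; [apply Rmax_lip|]. exact Hy.
    - apply Rmax_l. }
  destruct (Heine_cor2 (f := g) (a := 0) (b := A + 1) (fun x _ => Hg x)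
     (mkposreal eta He)) as [del Hdel].
  exists (Rmin del 1). split; [apply Rmin_pos; [apply cond_pos| lra]|].
  split; [apply Rmin_r|].
  intros x t Hx Ht Htx.
  assert (Hm1 : Rmin del 1 <= 1) by apply Rmin_r.
  assert (Hm2 : Rmin del 1 <= del) by apply Rmin_l.
  assert (E1 : g t = f t) by (unfold g; rewrite Rmax_right; auto).
  assert (E2 : g x = f x) by (unfold g; rewrite Rmax_right; lra).
  rewrite <- E1, <- E2. apply Hdel.
  - revert Htx; unfold Rabs; destruct Rcase_abs; intros; lra.
  - lra.
  - lra.
Qed.

Lemma exp_le_mono (x y : R) : x <= y -> exp x <= exp y.
Proof. intros H. destruct (Req_dec x y) as [->|E]; [lra|]. left; apply exp_increasing; lra. Qed.

Lemma Rabs_minus_tri (u v : R) : Rabs (u - v) <= Rabs u + Rabs v.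
Proof. unfold Rminus. eapply Rle_trans; [apply Rabs_triang|]. rewrite Rabs_Ropp; lra. Qed.

Lemma is_series_Rplus (u v : nat -> R) lu lv : is_series u lu -> is_series v lv ->
  is_series (fun n => u n + v n) (lu + lv).
Proof. intros H1 H2. exact (is_series_plus _ _ _ _ H1 H2). Qed.

Lemma is_series_Rscal (c : R) (u : nat -> R) lu : is_series u lu ->
  is_series (fun n => c * u n) (c * lu).
Proof. intros H1. exact (is_series_scal c _ _ H1). Qed.

Lemma is_series_ext_R (u v : nat -> R) l : (forall n, u n = v n) ->
  is_series u l -> is_series v l.
Proof. intros H1 H2. exact (is_series_ext u v l H1 H2). Qed.

Lemma ex_series_le_R (u v : nat -> R) : (forall n, Rabs (u n) <= v n) ->
  ex_series v -> ex_series u.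
Proof. intros H1 H2. apply (@ex_series_le R_AbsRing R_CompleteNormedModule u v); auto. Qed.

Theorem theorem2p2
  (a h : nat -> R) (Rad : R) (p : nat -> R -> R) (b : nat -> R) :
  1 < Rad ->
  abs_conv_on a Rad -> abs_conv_on h Rad ->
  a 0%nat <> 0 -> h 0%nat = 0 -> h 1%nat <> 0 ->
  (forall x t, Rabs t < Rad ->
     is_series (fun k => p k x * t ^ k) (PSeries a t * exp (x * PSeries h t))) ->
  (forall k x, 0 <= x -> 0 <= p k x) ->
  PSeries a 1 <> 0 ->
  is_derive (PSeries h) 1 1 ->
  (forall n, 0 < b n) ->
  (forall n, b n < b (S n)) ->
  is_lim_seq b p_infty ->
  is_lim_seq (fun n => b n / INR n) 0 ->
  forall f, CE f ->
  forall A, 0 < A ->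
  forall eps, 0 < eps ->
  exists N : nat, forall n : nat, (N <= n)%nat ->
    forall x, 0 <= x <= A ->
      ex_series (fun k => p k (INR n / b n * x) * f (INR k / INR n * b n)) /\
      Rabs (Tstar a h p b n f x - f x) < eps.
Proof.
  intros HR Ha _ _ _ _ Hshef Hp HA1ne Hder Hb _ _ Hbn f Hf A HA eps Heps.
  assert (HA1 : 0 < PSeries a 1).
  { assert (HS := Hshef 0 1 ltac:(rewrite Rabs_R1; lra)).
    rewrite Rmult_0_l, exp_0, Rmult_1_r in HS.
    assert (HSe : ex_series (fun k => p k 0 * 1 ^ k)) by (eexists; exact HS).
    apply is_series_unique in HS.
    assert (H0 : Series (fun _ : nat => 0) <= Series (fun k => p k 0 * 1 ^ k)).
    { apply Series_le; [| exact HSe].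
      intro k. split; [lra|]. rewrite pow1, Rmult_1_r. apply Hp; lra. }
    assert (Z : Series (fun _ : nat => 0) = 0).
    { rewrite <- (Series_ext (fun n => 0 * 0)) by (intro; ring).
      rewrite Series_scal_l. ring. }
    rewrite Z, HS in H0. lra. }
  destruct Hf as [Hfc [al [be [Hal [Hbe Hfb]]]]].
  destruct (unif_cont f A (conj Hfc (ex_intro _ al (ex_intro _ be (conj Hal (conj Hbe Hfb))))) ltac:(lra) (eps / 3) ltac:(lra))
    as [d [Hd [Hd1 Hu]]].
  pose (K := 2 * be * exp (al * (A + 1))).
  assert (HK : 0 < K) by (unfold K; pose proof (exp_pos (al * (A + 1))); nra).
  pose (lam := al + 36 * K / (eps * d)).
  assert (Hlam1 : 36 * K / (eps * d) > 0)
    by (apply Rdiv_lt_0_compat; [lra| apply Rmult_lt_0_compat; lra]).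
  assert (Hlam : 0 < lam) by (unfold lam; lra).
  destruct (eventual a h Rad b lam A HR Ha Hder HA1 Hb Hbn ltac:(lra) HA) as [N1 HN1].
  destruct (eventual a h Rad b (- lam) A HR Ha Hder HA1 Hb Hbn ltac:(lra) HA) as [N2 HN2].
  exists (max N1 N2). intros n Hn x Hx.
  destruct (HN1 n ltac:(lia)) as [HINR [Hsp HE1]].
  destruct (HN2 n ltac:(lia)) as [_ [Hsm HE2]].
  specialize (HE1 x Hx). specialize (HE2 x Hx).
  pose proof (Hb n) as Hbn0.
  assert (Hm : 0 < INR n / b n) by (apply Rdiv_lt_0_compat; auto).
  set (m := INR n / b n) in *.
  assert (Hy : 0 <= m * x) by nra.
  set (y := m * x) in *.
  set (sp := exp (lam / m)) in *.
  set (sm := exp (- lam / m)) in *.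
  assert (Hsp0 : 0 < sp) by apply exp_pos.
  assert (Hsm0 : 0 < sm) by apply exp_pos.
  assert (S1 := Hshef y 1 ltac:(rewrite Rabs_R1; lra)).
  assert (Sp := Hshef y sp ltac:(rewrite Rabs_pos_eq; lra)).
  assert (Sm := Hshef y sm ltac:(rewrite Rabs_pos_eq; lra)).
  set (G1 := PSeries a 1 * exp (y * PSeries h 1)) in *.
  set (Gp := PSeries a sp * exp (y * PSeries h sp)) in *.
  set (Gm := PSeries a sm * exp (y * PSeries h sm)) in *.
  assert (HG1 : 0 < G1) by (unfold G1; pose proof (exp_pos (y * PSeries h 1)); nra).
  pose (t := fun k : nat => INR k / INR n * b n).
  assert (Ht : forall k, t k = INR k / m) by (intro k; unfold t, m; field; lra).
  assert (Ht0 : forall k, 0 <= t k).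
  { intro k. rewrite Ht. apply Rdiv_le_0_compat; [apply pos_INR| lra]. }
  assert (Hpt : forall k, Rabs (f (t k) - f x) <=
     eps / 3 + K * exp (lam * (t k - x - d)) + K * exp (lam * (x - t k - d))).
  { intro k. pose proof (Ht0 k) as Htk.
    pose proof (exp_pos (lam * (t k - x - d))). pose proof (exp_pos (lam * (x - t k - d))).
    assert (Htri : Rabs (f (t k) - f x) <= be * exp (al * t k) + be * exp (al * x)).
    { eapply Rle_trans; [apply Rabs_minus_tri|].
      pose proof (Hfb (t k) Htk). pose proof (Hfb x ltac:(lra)). lra. }
    destruct (Rlt_dec (Rabs (t k - x)) d) as [Hc|Hc].
    - pose proof (Hu x (t k) Hx Htk Hc). nra.
    - destruct (Rle_dec (x + d) (t k)) as [Hge|Hlt].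
      + assert (E1 : exp (al * x) <= exp (al * t k)) by (apply exp_le_mono; nra).
        assert (E2 : exp (al * t k) <= exp (al * (A + 1) + al * (t k - x - d)))
          by (apply exp_le_mono; nra).
        assert (E3 : exp (al * (t k - x - d)) <= exp (lam * (t k - x - d)))
          by (apply exp_le_mono; unfold lam; nra).
        rewrite exp_plus in E2.
        assert (K * exp (al * (t k - x - d)) <= K * exp (lam * (t k - x - d))) by nra.
        assert (2 * be * exp (al * t k) <= K * exp (al * (t k - x - d)))
          by (unfold K; pose proof (exp_pos (al * (A + 1))); nra).
        nra.
      + assert (Hle : t k <= x - d).
        { revert Hc; unfold Rabs; destruct Rcase_abs; intros; lra. }
        assert (E1 : exp (al * t k) <= exp (al * (A + 1))) by (apply exp_le_mono; nra).
        assert (E2 : exp (al * x) <= exp (al * (A + 1))) by (apply exp_le_mono; nra).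
        assert (E3 : 1 <= exp (lam * (x - t k - d))).
        { rewrite <- exp_0. apply exp_le_mono. nra. }
        assert (Htri2 : Rabs (f (t k) - f x) <= K) by (unfold K; nra).
        nra. }
  pose (bk := fun k => p k y * (eps / 3 + K * exp (lam * (t k - x - d)) + K * exp (lam * (x - t k - d)))).
  pose (SB := eps / 3 * G1 + K * exp (- lam * (x + d)) * Gp + K * exp (lam * (x - d)) * Gm).
  assert (HSB : is_series bk SB).
  { unfold SB.
    apply is_series_ext_R with (u := fun k => eps / 3 * (p k y * 1 ^ k) +
       K * exp (- lam * (x + d)) * (p k y * sp ^ k) + K * exp (lam * (x - d)) * (p k y * sm ^ k)).
    - intro k. unfold bk, sp, sm. rewrite <- !exp_pow_INR, pow1.
      replace (lam * (t k - x - d)) with (- lam * (x + d) + INR k * (lam / m))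
        by (rewrite Ht; field; lra).
      replace (lam * (x - t k - d)) with (lam * (x - d) + INR k * (- lam / m))
        by (rewrite Ht; field; lra).
      rewrite !exp_plus. ring.
    - apply is_series_Rplus; [apply is_series_Rplus|]; apply is_series_Rscal; assumption. }
  pose (dk := fun k => p k y * (f (t k) - f x)).
  assert (Hdb : forall k, Rabs (dk k) <= bk k).
  { intro k. unfold dk, bk. rewrite Rabs_mult, (Rabs_pos_eq (p k y)) by (apply Hp; lra).
    apply Rmult_le_compat_l; [apply Hp; lra| apply Hpt]. }
  assert (Hdabs : ex_series (fun k => Rabs (dk k))).
  { apply ex_series_le_R with (v := bk); [| eexists; exact HSB].
    intro k. rewrite Rabs_Rabsolu. apply Hdb. }
  assert (Hdex : ex_series dk) by (apply ex_series_Rabs; exact Hdabs).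
  assert (Hmain : is_series (fun k => p k y * f (t k)) (Series dk + f x * G1)).
  { apply is_series_ext_R with (u := fun k => dk k + f x * (p k y * 1 ^ k)).
    - intro k. unfold dk. rewrite pow1. ring.
    - apply is_series_Rplus; [apply Series_correct; exact Hdex| apply is_series_Rscal; exact S1]. }
  assert (HSd : Rabs (Series dk) <= SB).
  { eapply Rle_trans; [apply Series_Rabs; exact Hdabs|].
    rewrite <- (is_series_unique _ _ HSB). apply Series_le; [| eexists; exact HSB].
    intro k. split; [apply Rabs_pos| apply Hdb]. }
  split.
  { eexists. exact Hmain. }
  unfold Tstar. fold m. fold y.
  change (fun k => p k y * f (INR k / INR n * b n)) with (fun k => p k y * f (t k)).
  rewrite (is_series_unique _ _ Hmain).
  assert (Hexp : exp (- m * x * PSeries h 1) = / exp (y * PSeries h 1)).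
  { rewrite <- exp_Ropp. f_equal. unfold y. ring. }
  rewrite Hexp.
  assert (Hf1 : / exp (y * PSeries h 1) / PSeries a 1 * (Series dk + f x * G1) - f x
     = Series dk / G1).
  { assert (exp (y * PSeries h 1) <> 0) by (apply Rgt_not_eq, exp_pos).
    unfold G1. field. split; auto. }
  rewrite Hf1.
  assert (Hexpd : exp (- lam * d) <= eps / (36 * K)).
  { assert (Hl : 36 * K / eps <= lam * d).
    { unfold lam. replace (36 * K / eps) with (36 * K / (eps * d) * d) by (field; lra). nra. }
    pose proof (exp_ineq1 (lam * d) ltac:(nra)).
    replace (- lam * d) with (- (lam * d)) by ring. rewrite exp_Ropp.
    assert (H36 : 0 < 36 * K / eps) by (apply Rdiv_lt_0_compat; lra).
    replace (eps / (36 * K)) with (/ (36 * K / eps)) by (field; lra).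
    apply Rinv_le_contravar; lra. }
  assert (Ee1 : exp (- lam * (x + d)) = exp (- lam * d) * exp (- lam * x))
    by (rewrite <- exp_plus; f_equal; ring).
  assert (Ee2 : exp (lam * (x - d)) = exp (- lam * d) * exp (- - lam * x))
    by (rewrite <- exp_plus; f_equal; ring).
  assert (HKe : K * exp (- lam * d) <= eps / 36).
  { replace (eps / 36) with (K * (eps / (36 * K))) by (field; lra).
    apply Rmult_le_compat_l; lra. }
  assert (HKe0 : 0 < K * exp (- lam * d)) by (pose proof (exp_pos (- lam * d)); nra).
  assert (HSB2 : SB <= 2 * eps / 3 * G1).
  { unfold SB. rewrite Ee1, Ee2.
    assert (T1 : K * (exp (- lam * d) * exp (- lam * x)) * Gp
       = K * exp (- lam * d) * (exp (- lam * x) * Gp)) by ring.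
    assert (T2 : K * (exp (- lam * d) * exp (- - lam * x)) * Gm
       = K * exp (- lam * d) * (exp (- - lam * x) * Gm)) by ring.
    rewrite T1, T2.
    assert (U1 : K * exp (- lam * d) * (exp (- lam * x) * Gp) <= eps / 36 * (6 * G1)).
    { apply Rle_trans with (K * exp (- lam * d) * (6 * G1)).
      - apply Rmult_le_compat_l; lra.
      - apply Rmult_le_compat_r; lra. }
    assert (U2 : K * exp (- lam * d) * (exp (- - lam * x) * Gm) <= eps / 36 * (6 * G1)).
    { apply Rle_trans with (K * exp (- lam * d) * (6 * G1)).
      - apply Rmult_le_compat_l; lra.
      - apply Rmult_le_compat_r; lra. }
    lra. }
  unfold Rdiv. rewrite Rabs_mult, Rabs_inv, (Rabs_pos_eq G1) by lra.
  apply Rle_lt_trans with (SB * / G1).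
  - apply Rmult_le_compat_r; [left; apply Rinv_0_lt_compat; lra| exact HSd].
  - apply Rmult_lt_reg_r with G1; [lra|].
    rewrite Rmult_assoc, Rinv_l, Rmult_1_r by lra. nra.
Qed.
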